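(* Let $r\ge2$, $N\ge r-1$, $d\ge1$ be integers. For any function $f\colon\Delta_N\to\mathbb{R}^d$, we have $\delta(\mathrm{Conf}_r^{\Delta}(f))\le\sqrt{r}\cdot\delta(f)$.
   Context: $\Delta_N$ is the geometric $N$-simplex. $\mathrm{Conf}_r^{\Delta}(\Delta_N)=\{(x_1,\dots,x_r)\in(\Delta_N)^{\times r}: \text{the } x_i \text{ lie in pairwise disjoint faces}\}$ with the subspace topology. $W_r^{\oplus d}=\{(z_1,\dots,z_r)\in(\mathbb{R}^d)^{\oplus r}: z_1+\dots+z_r=0\}$ with the Euclidean norm. $\mathrm{Conf}_r^{\Delta}(f)\colon\mathrm{Conf}_r^{\Delta}(\Delta_N)\to W_r^{\oplus d}$ is $(x_1,\dots,x_r)\mapsto\big(f(x_i)-\tfrac1r\sum_{j=1}^rf(x_j)\big)_{i=1}^r$. For a topological space $X$ and a metric space $Y$, $\delta(h)=\inf\{\delta\ge 0 : \text{for every } x\in X \text{ there is an open neighborhood } U_x \text{ of } x \text{ with } \operatorname{diam}(h(U_x))\le\delta\}$. *)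

(* Defs.v *)
From HB Require Import structures.
From mathcomp Require Import all_boot all_order all_algebra.
From mathcomp Require Import all_classical all_reals all_analysis.
Set Implicit Arguments. Unset Strict Implicit. Unset Printing Implicit Defensive.
Import Order.TTheory GRing.Theory Num.Theory.
Import numFieldNormedType.Exports.
Local Open Scope classical_set_scope.
Local Open Scope ring_scope.

Section Defs.
Variable R : realType.

(* Euclidean distance on m x n real matrices (all entries squared). For row
   vectors 'rV_d this is the Euclidean distance on R^d; for 'M_(r,d) it is
   the Euclidean norm on (R^d)^{oplus r}. *)
Definition edist (m n : nat) (a b : 'M[R]_(m, n)) : R :=
  Num.sqrt (\sum_(i < m) \sum_(j < n) (a i j - b i j) ^+ 2).

Definition ediam (m n : nat) (B : set 'M[R]_(m, n)) : \bar R :=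
  ereal_sup [set (edist a b)%:E | a in B & b in B].

(* delta(h) for h restricted to a subspace A of a topological space T:
   open neighbourhoods of x in the subspace topology are the U `&` A with U
   open in T and x in U. *)
Definition delta (T : topologicalType) (A : set T) (m n : nat)
    (h : T -> 'M[R]_(m, n)) : \bar R :=
  ereal_inf [set e%:E | e in [set e : R | 0 <= e /\
    (forall x, A x -> exists U : set T, [/\ open U, U x &
        (ediam (h @` (U `&` A)) <= e%:E)%E])]].

(* geometric N-simplex, as the standard simplex in R^{N+1} *)
Definition simplex (N : nat) : set 'rV[R]_N.+1 :=
  [set x | (forall i, 0 <= x 0 i) /\ \sum_i x 0 i = 1].

Definition face (N : nat) (S : {set 'I_N.+1}) : set 'rV[R]_N.+1 :=
  [set x | simplex x /\ forall i, x 0 i != 0 -> i \in S].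

(* Conf_r^Delta(Delta_N); row i of X is the point x_i *)
Definition confD (r N : nat) : set 'M[R]_(r, N.+1) :=
  [set X | exists F : 'I_r -> {set 'I_N.+1},
     [/\ forall i, F i != finset.set0,
         forall i j, i != j -> (F i :&: F j)%SET = finset.set0 &
         forall i, face (F i) (row i X)]].

(* Conf_r^Delta(f); row i of the result is f(x_i) - (1/r) sum_j f(x_j) *)
Definition confF (r N d : nat) (f : 'rV[R]_N.+1 -> 'rV[R]_d)
    (X : 'M[R]_(r, N.+1)) : 'M[R]_(r, d) :=
  \matrix_(i < r, k < d)
     (f (row i X) 0 k - r%:R^-1 * \sum_(j < r) f (row j X) 0 k).

End Defs.

(* Main.v *)
Require Import Defs.
From HB Require Import structures.
From mathcomp Require Import all_boot all_order all_algebra.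
From mathcomp Require Import all_classical all_reals all_analysis.
From mathcomp Require Import ring lra.
Import Order.TTheory GRing.Theory Num.Theory.
Import numFieldNormedType.Exports.
Local Open Scope classical_set_scope.
Local Open Scope ring_scope.

Lemma var_eq (R : realType) r (a : 'I_r -> R) m :
  \sum_i a i = r%:R * m ->
  \sum_i (a i - m) ^+ 2 = \sum_i a i ^+ 2 - r%:R * m ^+ 2.
Proof.
move=> hS.
under eq_bigr do rewrite sqrrB.
rewrite big_split /= sumrB sumr_const card_ord sumrMnl -mulr_suml hS.
rewrite -(mulr_natl (m ^+ 2) r) -(mulr_natl (r%:R * m * m) 2); ring.
Qed.

Lemma var_ineq (R : realType) r (a : 'I_r -> R) : (0 < r)%N ->
  \sum_i (a i - r%:R^-1 * \sum_j a j) ^+ 2 <= \sum_i a i ^+ 2.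
Proof.
move=> r0; rewrite (@var_eq _ _ _ (r%:R^-1 * \sum_j a j)).
  by rewrite lerBlDr lerDl; apply: mulr_ge0 => //; exact: sqr_ge0.
by rewrite mulrA mulfV ?mul1r // pnatr_eq0 -lt0n.
Qed.

Lemma confF_dist (R : realType) r N d (f : 'rV[R]_N.+1 -> 'rV[R]_d)
  (Y Y' : 'M[R]_(r, N.+1)) e : (0 < r)%N -> 0 <= e ->
  (forall i, Defs.edist (f (row i Y)) (f (row i Y')) <= e) ->
  Defs.edist (confF f Y) (confF f Y') <= Num.sqrt r%:R * e.
Proof.
move=> r0 e0 H; rewrite /Defs.edist.
pose a := fun i k => f (row i Y) 0 k - f (row i Y') 0 k.
have E i k : confF f Y i k - confF f Y' i k = a i k - r%:R^-1 * \sum_j a j k.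
  by rewrite !mxE /a sumrB; ring.
under eq_bigr do under eq_bigr do rewrite E.
rewrite exchange_big /=.
apply: (@le_trans _ _ (Num.sqrt (\sum_i \sum_k a i k ^+ 2))).
  rewrite [X in _ <= Num.sqrt X]exchange_big; apply: ler_wsqrtr.
  by apply: ler_sum => k _; exact: var_ineq.
have Hi i : \sum_k a i k ^+ 2 <= e ^+ 2.
  have := H i; rewrite /Defs.edist big_ord1 => h.
  have s0 : 0 <= \sum_k a i k ^+ 2 by apply: sumr_ge0 => k _; exact: sqr_ge0.
  rewrite -(sqr_sqrtr s0) ler_sqr // ?nnegrE ?sqrtr_ge0 //.
apply: (@le_trans _ _ (Num.sqrt (r%:R * e ^+ 2))).
  rewrite ler_sqrt; last by apply: mulr_ge0 => //; exact: sqr_ge0.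
  apply: (@le_trans _ _ (\sum_(i < r) e ^+ 2)); first exact: ler_sum.
  by rewrite sumr_const card_ord mulr_natl.
by rewrite sqrtrM // sqrtr_sqr ger0_norm.
Qed.

Lemma row_ball (R : realType) r n (X Y : 'M[R]_(r, n)) eps i :
  ball X eps Y -> ball (row i X) eps (row i Y).
Proof.
move=> [e0 H]; split => // i' j; rewrite !mxE; exact: H.
Qed.

Theorem lemma4p11 (R : realType) (r N d : nat) (f : 'rV[R]_N.+1 -> 'rV[R]_d) :
  (2 <= r)%N -> (r.-1 <= N)%N -> (1 <= d)%N ->
  (delta (@confD R r N) (confF f) <= (Num.sqrt r%:R)%:E * delta (@simplex R N) f)%E.
Proof.
move=> r2 _ _.
have r0 : (0 < r)%N by apply: leq_trans r2.
have sr0 : 0 < Num.sqrt r%:R :> R by rewrite sqrtr_gt0 ltr0n.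
rewrite /delta -ereal_inf_pZl //.
apply: le_ereal_inf_tmp => _ [_ [e [e0 He] <-] <-].
rewrite -EFinM; apply: ereal_inf_lbound.
exists (Num.sqrt r%:R * e) => //; split; first by rewrite mulr_ge0 ?sqrtr_ge0.
move=> X [F [_ _ HF]].
have rowS i : @simplex R N (row i X) by case: (HF i).
have HU0 : forall i, exists U, [/\ open U, U (row i X) &
   (ediam (f @` (U `&` @simplex R N)) <= e%:E)%E] by move=> i; exact: He.
have [U HU] := choice HU0.
have He0 : forall i : 'I_r, exists eps : R,
    0 < eps /\ ball (row i X) eps `<=` U i.
  move=> i; have [hO Ux _] := HU i.
  have : nbhs (row i X) (U i) by apply: open_nbhs_nbhs; split.
  by move/nbhs_ballP => [eps eps0 H]; exists eps.
have [eps Heps] := choice He0.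
pose m := \big[Num.min/1]_i eps i.
have m0 : 0 < m.
  by apply: (big_rec (fun x => 0 < x)) => // i x _ hx; rewrite lt_min hx (Heps i).1.
have mle i : m <= eps i by rewrite /m (bigD1 i) //= ge_min lexx.
exists (ball X m); split; [exact: ball_open | exact: ballxx |].
rewrite /ediam; apply: ge_ereal_sup => z.
move=> [_ [Y [BY cY] <-] [_ [Y' [BY' cY'] <-] <-]].
rewrite lee_fin; apply: confF_dist => // i.
have [_ _ Hd] := HU i.
have inU (Z : 'M[R]_(r, N.+1)) : ball X m Z -> confD Z ->
    (U i `&` @simplex R N) (row i Z).
  move=> BZ [F' [_ _ HF']]; split; last by case: (HF' i).
  by apply: (Heps i).2; apply: (le_ball (mle i)); exact: row_ball.
rewrite -lee_fin; apply: le_trans Hd; apply: ereal_sup_ubound.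
by exists (f (row i Y)); [exists (row i Y) => //; exact: inU|
  exists (f (row i Y')) => //; exists (row i Y') => //; exact: inU].
Qed.
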